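(* For every causal poset $K$, $\mathrm{C}\mathrm{L}(K)=\mathrm{C}\mathrm{F}(K)\cap\mathrm{L}(K)$.
   Context: A causal poset is a poset $(K,\le)$ that is pathwise connected (for all $a,a'$ there are $a_1=a,\dots,a_{n+1}=a'$, $o_1,\dots,o_n$ with $a_i,a_{i+1}\le o_i$) and carries an irreflexive symmetric relation $\perp$ with $o\perp a,\ \tilde o\le o\Rightarrow\tilde o\perp a$. A 1-simplex of $K$ is a triple $b=(|b|;\partial_0b,\partial_1b)$ of elements of $K$ with $\partial_0b,\partial_1b\le|b|$ ($|b|$ is its support, $\partial_1b$ its starting point, $\partial_0b$ its ending point); its opposite is $\overline b=(|b|;\partial_1b,\partial_0b)$. Let $\mathrm{T}_1(K)$ be the set of 1-simplices with $\partial_0b\neq|b|$ and $\partial_1b\ne|b|$. $\mathrm{F}(K)$ is the group generated by $\mathrm{T}_1(K)$ subject to the relations $b^{-1}=\overline b$ (a free group); its elements are words $w=b_n\cdots b_1$, $b_i\in\mathrm{T}_1(K)$, and $\overline w=\overline{b_1}\cdots\overline{b_n}$ is the inverse. The support $|w|$ of a word is the set of supports of the letters of its reduced form. A word $b_n\cdots b_1$ is a path from $a$ to $o$ if $\partial_1b_1=a$, $\partial_0b_n=o$ and $\partial_0b_i=\partial_1b_{i+1}$ for $i<n$; a loop over $o$ is a path from $o$ to $o$. $\mathrm{L}(K)$ is the subgroup of $\mathrm{F}(K)$ generated by loops. Two words are causally disjoint, $w_1\perp w_2$, if there are $o_1\perp o_2$ in $K$ with every element of $|w_i|$ below $o_i$,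 $i=1,2$. A causal commutator of $\mathrm{F}(K)$ (resp. of $\mathrm{L}(K)$) is a word $w\,p_1p_2\overline{p_1}\,\overline{p_2}\,\overline w$ where $p_1,p_2$ are loops (over some $o_1$, $o_2$) with $p_1\perp p_2$ and $w\in\mathrm{F}(K)$ (resp. $w\in\mathrm{L}(K)$). $\mathrm{C}\mathrm{F}(K)$ and $\mathrm{C}\mathrm{L}(K)$ are the subgroups generated by the causal commutators of $\mathrm{F}(K)$, resp. of $\mathrm{L}(K)$. *)

(* Defs.v *)
(* Free group F(K) on T1(K) represented by words (lists of
   1-simplices) modulo free cancellation; subgroups are predicates on words
   closed under that equivalence. *)
From Stdlib Require Import List Relations.
Import ListNotations.
Set Implicit Arguments.

Section CausalPoset.
Variable K : Type.
Variable le : K -> K -> Prop.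
Variable perp : K -> K -> Prop.

Definition joint_upper (a b : K) : Prop := exists o, le a o /\ le b o.

Definition causal_poset : Prop :=
  (forall a, le a a) /\
  (forall a b, le a b -> le b a -> a = b) /\
  (forall a b c, le a b -> le b c -> le a c) /\
  (forall a a', clos_refl_trans_1n K joint_upper a a') /\
  (forall a, ~ perp a a) /\
  (forall a b, perp a b -> perp b a) /\
  (forall o a o', perp o a -> le o' o -> perp o' a).

Record simplex := Simplex { supp : K; bd0 : K; bd1 : K }.

Definition opp (b : simplex) : simplex := Simplex (supp b) (bd1 b) (bd0 b).

Definition T1 (b : simplex) : Prop :=
  le (bd0 b) (supp b) /\ le (bd1 b) (supp b) /\
  bd0 b <> supp b /\ bd1 b <> supp b.

(* A word b_n ... b_1 is stored as the list [b_1; ...; b_n]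
   (in the order in which the letters are traversed). *)
Definition word := list simplex.

Definition is_word (w : word) : Prop := Forall T1 w.

(* group product  u v  (v applied first) *)
Definition wmul (u v : word) : word := v ++ u.
Definition winv (w : word) : word := rev (map opp w).

Inductive cancel_step : word -> word -> Prop :=
| cancel_intro : forall l1 l2 b, T1 b ->
    cancel_step (l1 ++ b :: opp b :: l2) (l1 ++ l2).

Definition wequiv : word -> word -> Prop := clos_refl_sym_trans word cancel_step.

Definition reduced (w : word) : Prop :=
  ~ exists l1 l2 b, w = l1 ++ b :: opp b :: l2.

Definition supp_below (w : word) (o : K) : Prop :=
  forall r, reduced r -> wequiv w r -> forall b, In b r -> le (supp b) o.

Definition causally_disjoint (w1 w2 : word) : Prop :=
  exists o1 o2, perp o1 o2 /\ supp_below w1 o1 /\ supp_below w2 o2.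

Fixpoint path_from (a o : K) (w : word) : Prop :=
  match w with
  | [] => False
  | [b] => bd1 b = a /\ bd0 b = o
  | b :: w' => bd1 b = a /\ path_from (bd0 b) o w'
  end.

Definition is_loop (w : word) : Prop :=
  is_word w /\ exists o, path_from o o w.

Inductive gen (S : word -> Prop) : word -> Prop :=
| gen_base : forall w, S w -> gen S w
| gen_one : gen S []
| gen_mul : forall u v, gen S u -> gen S v -> gen S (wmul u v)
| gen_inv : forall u, gen S u -> gen S (winv u)
| gen_eq : forall u v, gen S u -> wequiv u v -> gen S v.

Definition Lgrp : word -> Prop := gen is_loop.

Definition commutator_word (w p1 p2 : word) : word :=
  wmul w (wmul p1 (wmul p2 (wmul (winv p1) (wmul (winv p2) (winv w))))).

Definition causal_commutator (H : word -> Prop) (c : word) : Prop :=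
  exists w p1 p2, H w /\ is_loop p1 /\ is_loop p2 /\
    causally_disjoint p1 p2 /\ c = commutator_word w p1 p2.

Definition CF : word -> Prop := gen (causal_commutator is_word).
Definition CL : word -> Prop := gen (causal_commutator Lgrp).

End CausalPoset.

(* Main.v *)
Require Import Defs.
From Stdlib Require Import List Relations Lia.
From Stdlib Require Import Classical ClassicalEpsilon ProofIrrelevance FunctionalExtensionality PropExtensionality.
Import ListNotations.
Set Implicit Arguments.


Section S1.
Variable K : Type.
Variable le : K -> K -> Prop.

Notation word := (word K).
Notation W := (wequiv le).

Lemma opp_opp (b : simplex K) : opp (opp b) = b.
Proof. destruct b; reflexivity. Qed.

Lemma T1_opp b : T1 le b -> T1 le (opp b).
Proof. unfold T1, opp; simpl; tauto. Qed.

Lemma winv_app (u v : word) : winv (u ++ v) = winv v ++ winv u.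
Proof. unfold winv. rewrite map_app, rev_app_distr. reflexivity. Qed.

Lemma winv_winv (u : word) : winv (winv u) = u.
Proof. unfold winv. rewrite map_rev, rev_involutive, map_map.
  induction u; simpl; auto. rewrite opp_opp, IHu; auto. Qed.

Lemma winv_nil : winv ([] : word) = [].
Proof. reflexivity. Qed.

Lemma winv_cons b (u : word) : winv (b :: u) = winv u ++ [opp b].
Proof. reflexivity. Qed.

Lemma is_word_app (u v : word) : is_word le (u ++ v) <-> is_word le u /\ is_word le v.
Proof. unfold is_word. rewrite Forall_app. tauto. Qed.

Lemma is_word_winv (u : word) : is_word le u -> is_word le (winv u).
Proof. unfold is_word, winv. intro H. apply Forall_rev. apply Forall_map.
  eapply Forall_impl; [|exact H]. apply T1_opp. Qed.

Lemma W_refl (u : word) : W u u.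
Proof. apply rst_refl. Qed.
Lemma W_sym (u v : word) : W u v -> W v u.
Proof. apply rst_sym. Qed.
Lemma W_trans (u v w : word) : W u v -> W v w -> W u w.
Proof. apply rst_trans. Qed.
Lemma W_step (u v : word) : cancel_step le u v -> W u v.
Proof. apply rst_step. Qed.

Lemma W_cancel (l1 l2 : word) b : T1 le b -> W (l1 ++ b :: opp b :: l2) (l1 ++ l2).
Proof. intro H. apply W_step. constructor. auto. Qed.

Lemma W_ind_gen (P : word -> word -> Prop) :
  (forall u, P u u) -> (forall u v, P u v -> P v u) ->
  (forall u v w, P u v -> P v w -> P u w) ->
  (forall l1 l2 b, T1 le b -> P (l1 ++ b :: opp b :: l2) (l1 ++ l2)) ->
  forall u v, W u v -> P u v.
Proof.
  intros Hr Hs Ht Hc u v H. induction H.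
  - destruct H. apply Hc; auto.
  - apply Hr.
  - apply Hs; auto.
  - eapply Ht; eauto.
Qed.

Lemma W_app_l (u u' v : word) : W u u' -> W (v ++ u) (v ++ u').
Proof.
  revert u u'. apply W_ind_gen.
  - intros; apply W_refl.
  - intros; apply W_sym; auto.
  - intros; eapply W_trans; eauto.
  - intros. rewrite !app_assoc. apply W_cancel; auto.
Qed.

Lemma W_app_r (u u' v : word) : W u u' -> W (u ++ v) (u' ++ v).
Proof.
  revert u u'. apply W_ind_gen.
  - intros; apply W_refl.
  - intros; apply W_sym; auto.
  - intros; eapply W_trans; eauto.
  - intros. rewrite <- !app_assoc. simpl. apply W_cancel; auto.
Qed.

Lemma W_app (u u' v v' : word) : W u u' -> W v v' -> W (u ++ v) (u' ++ v').
Proof. intros. eapply W_trans. apply W_app_r; eauto. apply W_app_l; auto. Qed.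

Lemma W_winv (u u' : word) : W u u' -> W (winv u) (winv u').
Proof.
  revert u u'. apply W_ind_gen.
  - intros; apply W_refl.
  - intros; apply W_sym; auto.
  - intros; eapply W_trans; eauto.
  - intros. rewrite !winv_app. rewrite !winv_cons. simpl.
    rewrite <- !app_assoc. simpl.
    replace (opp (opp b)) with b by (symmetry; apply opp_opp).
    apply W_cancel. auto.
Qed.

Lemma W_inv_r (u : word) : is_word le u -> W (u ++ winv u) [].
Proof.
  induction u; intros H; simpl. apply W_refl.
  inversion H; subst. rewrite winv_cons.
  apply W_trans with (a :: [] ++ [opp a]).
  - rewrite app_assoc. change (W ([a] ++ ((u ++ winv u) ++ [opp a])) ([a] ++ ([] ++ [opp a]))).
    apply W_app_l. apply W_app_r. apply IHu; auto.
  - simpl. apply (W_cancel [] []); auto.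
Qed.

Lemma W_inv_l (u : word) : is_word le u -> W (winv u ++ u) [].
Proof.
  intro H. pattern u at 2. rewrite <- (winv_winv u). apply W_inv_r. apply is_word_winv; auto.
Qed.

Lemma W_is_word (u v : word) : W u v -> (is_word le u <-> is_word le v).
Proof.
  revert u v. apply W_ind_gen.
  - tauto.
  - intros; tauto.
  - intros; tauto.
  - intros. rewrite !is_word_app. unfold is_word. split.
    + intros [H1 H2]. rewrite !Forall_cons_iff in H2. tauto.
    + intros [H1 H2]. split; auto. constructor; auto. constructor; auto. apply T1_opp; auto.
Qed.

Inductive walk : K -> K -> word -> Prop :=
| walk_nil : forall a, walk a a []
| walk_cons : forall a c b w, bd1 b = a -> walk (bd0 b) c w -> walk a c (b :: w).

Lemma walk_app a c (u v : word) : walk a c (u ++ v) <-> exists m, walk a m u /\ walk m c v.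
Proof.
  revert a. induction u; intros; simpl; split.
  - intros H. exists a. split; auto. constructor.
  - intros [m [H1 H2]]. inversion H1; subst; auto.
  - intros H. inversion H; subst. apply IHu in H5. destruct H5 as [m [H1 H2]].
    exists m. split; auto. constructor; auto.
  - intros [m [H1 H2]]. inversion H1; subst. constructor; auto. apply IHu. eauto.
Qed.

Lemma walk_app2 a m c (u v : word) : walk a m u -> walk m c v -> walk a c (u ++ v).
Proof. intros. apply walk_app. eauto. Qed.

Lemma walk_winv a c (u : word) : walk a c u -> walk c a (winv u).
Proof.
  induction 1. constructor.
  rewrite winv_cons. eapply walk_app2. eauto. subst. constructor. reflexivity. constructor.
Qed.

Lemma walk_single b : walk (bd1 b) (bd0 b) [b].
Proof. constructor; auto. constructor. Qed.

Lemma path_from_walk a o (w : word) : path_from a o w <-> w <> [] /\ walk a o w.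
Proof.
  revert a. induction w; intros; simpl.
  - split; [tauto|]. intros [H _]; congruence.
  - destruct w.
    + split. intros [H1 H2]. split. congruence. constructor; auto. subst. constructor.
      intros [_ H]. inversion H; subst. inversion H5; subst. auto.
    + rewrite IHw. split.
      * intros [H1 [H2 H3]]. split. congruence. constructor; auto.
      * intros [_ H]. inversion H; subst. split; auto. split; auto. congruence.
Qed.

End S1.
Lemma is_word_app2 K (le : K -> K -> Prop) (u v : Defs.word K) : is_word le u -> is_word le v -> is_word le (u ++ v).
Proof. intros. apply is_word_app. auto. Qed.
Lemma W_ins K (le : K -> K -> Prop) (x l y : Defs.word K) : is_word le l -> wequiv le (x ++ (l ++ winv l) ++ y) (x ++ y).
Proof. intros. apply W_app_l. change y with ([] ++ y) at 2. apply W_app_r. apply W_inv_r; auto. Qed.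
Lemma W_ins' K (le : K -> K -> Prop) (x l y : Defs.word K) : is_word le l -> wequiv le (x ++ (winv l ++ l) ++ y) (x ++ y).
Proof. intros. apply W_app_l. change y with ([] ++ y) at 2. apply W_app_r. apply W_inv_l; auto. Qed.
Lemma W_cons K (le : K -> K -> Prop) b (u u' : Defs.word K) : wequiv le u u' -> wequiv le (b :: u) (b :: u').
Proof. intros. apply (W_app_l [b]); auto. Qed.
Lemma W_mid K (le : K -> K -> Prop) (t y : Defs.word K) : is_word le t -> wequiv le (winv t ++ t ++ y) y.
Proof. intros. rewrite app_assoc. change y with ([] ++ y) at 2. apply W_app_r. apply W_inv_l; auto. Qed.
Lemma W_mid2 K (le : K -> K -> Prop) (t y : Defs.word K) : is_word le t -> wequiv le (t ++ winv t ++ y) y.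
Proof. intros. rewrite app_assoc. change y with ([] ++ y) at 2. apply W_app_r. apply W_inv_r; auto. Qed.
Lemma walk_cancel K (a c : K) (l1 l2 : Defs.word K) b : walk a c (l1 ++ b :: opp b :: l2) -> walk a c (l1 ++ l2).
Proof.
  intro H. apply walk_app in H. destruct H as [m [H1 H2]].
  inversion H2 as [|x y z w E1 H3]; subst. inversion H3 as [|x' y' z' w' E2 H4]; subst.
  eapply walk_app2. eauto. unfold opp in H4. simpl in H4. exact H4.
Qed.


Section S2.
Variable K : Type.
Variable le : K -> K -> Prop.
Variable perp : K -> K -> Prop.

Notation word := (word K).
Notation W := (wequiv le).

Lemma gen_app (S : word -> Prop) u v : gen le S u -> gen le S v -> gen le S (u ++ v).
Proof. intros. apply (gen_mul H0 H). Qed.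

Lemma gen_winv' (S : word -> Prop) u : gen le S u -> gen le S (winv u).
Proof. apply gen_inv. Qed.

Lemma gen_W (S : word -> Prop) u v : gen le S u -> W u v -> gen le S v.
Proof. apply gen_eq. Qed.

Lemma gen_mono (S S' : word -> Prop) : (forall u, S u -> S' u) -> forall u, gen le S u -> gen le S' u.
Proof. intros HS u H. induction H. apply gen_base; auto. apply gen_one. apply gen_mul; auto.
  apply gen_inv; auto. eapply gen_eq; eauto. Qed.

Lemma gen_words (S : word -> Prop) : (forall u, S u -> is_word le u) -> forall u, gen le S u -> is_word le u.
Proof.
  intros HS u H. induction H.
  - auto.
  - constructor.
  - unfold wmul. apply is_word_app2; auto.
  - apply is_word_winv; auto.
  - eapply W_is_word; [apply W_sym; eauto|]; auto.
Qed.

Lemma comm_eq (w p1 p2 : word) :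
  commutator_word w p1 p2 = winv w ++ winv p2 ++ winv p1 ++ p2 ++ p1 ++ w.
Proof. unfold commutator_word, wmul. rewrite <- !app_assoc. reflexivity. Qed.

Lemma loop_word (p : word) : is_loop le p -> is_word le p.
Proof. intros [H _]; auto. Qed.

Lemma L_word u : Lgrp le u -> is_word le u.
Proof. apply gen_words. apply loop_word. Qed.

Lemma L_app u v : Lgrp le u -> Lgrp le v -> Lgrp le (u ++ v).
Proof. apply gen_app. Qed.
Lemma L_winv u : Lgrp le u -> Lgrp le (winv u).
Proof. apply gen_inv. Qed.
Lemma L_nil : Lgrp le [].
Proof. apply gen_one. Qed.
Lemma L_loop p : is_loop le p -> Lgrp le p.
Proof. apply gen_base. Qed.

Lemma cc_word (H : word -> Prop) : (forall u, H u -> is_word le u) ->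
  forall c, causal_commutator le perp H c -> is_word le c.
Proof.
  intros HH c [w [p1 [p2 [Hw [H1 [H2 [_ E]]]]]]]. subst. rewrite comm_eq.
  apply loop_word in H1. apply loop_word in H2. apply HH in Hw.
  repeat (apply is_word_app2); auto using is_word_winv.
Qed.

Lemma CF_word u : CF le perp u -> is_word le u.
Proof. apply gen_words. apply cc_word. auto. Qed.

Lemma CL_word u : CL le perp u -> is_word le u.
Proof. apply gen_words. apply cc_word. apply L_word. Qed.

Lemma CL_L u : CL le perp u -> Lgrp le u.
Proof.
  intro H. induction H.
  - destruct H as [w0 [p1 [p2 [Hw [H1 [H2 [_ E]]]]]]]. subst. rewrite comm_eq.
    apply L_loop in H1. apply L_loop in H2.
    repeat (apply L_app); auto using L_winv.
  - apply L_nil.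
  - apply gen_mul; auto.
  - apply gen_inv; auto.
  - eapply gen_eq; eauto.
Qed.

Lemma CL_CF u : CL le perp u -> CF le perp u.
Proof.
  apply gen_mono. intros c [w [p1 [p2 [Hw [H1 [H2 [H3 E]]]]]]].
  exists w, p1, p2. split. apply L_word; auto. tauto.
Qed.

Lemma CL_conj c : CL le perp c -> forall l, Lgrp le l -> CL le perp (winv l ++ c ++ l).
Proof.
  intro H. induction H; intros l Hl.
  - destruct H as [w0 [p1 [p2 [Hw [H1 [H2 [H3 E]]]]]]]. subst. apply gen_base.
    exists (w0 ++ l), p1, p2. split. apply L_app; auto. split; auto. split; auto. split; auto.
    rewrite !comm_eq. rewrite winv_app. rewrite <- !app_assoc. reflexivity.
  - eapply gen_eq. apply gen_one. apply W_sym. simpl. apply W_inv_l. apply L_word; auto.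
  - unfold wmul. eapply gen_eq. apply gen_app. apply (IHgen2 l Hl). apply (IHgen1 l Hl).
    replace ((winv l ++ v ++ l) ++ winv l ++ u ++ l) with ((winv l ++ v) ++ (l ++ winv l) ++ (u ++ l))
      by (rewrite <- !app_assoc; reflexivity).
    eapply W_trans. apply W_ins. apply L_word; auto. rewrite <- !app_assoc. apply W_refl.
  - assert (E : winv (winv l ++ u ++ l) = winv l ++ winv u ++ l).
    { rewrite !winv_app, winv_winv, app_assoc. reflexivity. }
    rewrite <- E. apply gen_inv. apply IHgen; auto.
  - eapply gen_eq. apply (IHgen l Hl). apply W_app_l. apply W_app_r. auto.
Qed.

Lemma CL_conj' c l : CL le perp c -> Lgrp le l -> CL le perp (l ++ c ++ winv l).
Proof.
  intros. pattern l at 1. rewrite <- (winv_winv l). apply CL_conj; auto. apply L_winv; auto.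
Qed.

End S2.


Section S3.
Variable K : Type.
Variable le : K -> K -> Prop.

Notation word := (word K).
Notation W := (wequiv le).

Definition dec (P : Prop) : {P} + {~P} := excluded_middle_informative P.

Definition conn (u v : K) : Prop := exists w : word, is_word le w /\ walk u v w.

Lemma conn_refl u : conn u u.
Proof. exists []. split. constructor. constructor. Qed.
Lemma conn_sym u v : conn u v -> conn v u.
Proof. intros [w [H1 H2]]. exists (winv w). split. apply is_word_winv; auto. apply walk_winv; auto. Qed.
Lemma conn_trans u v x : conn u v -> conn v x -> conn u x.
Proof. intros [w [H1 H2]] [w' [H1' H2']]. exists (w ++ w'). split. apply is_word_app2; auto.
  eapply walk_app2; eauto. Qed.

Definition root (u : K) : K := epsilon (inhabits u) (fun z => conn z u).

Lemma root_conn u : conn (root u) u.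
Proof. unfold root. apply epsilon_spec. exists u. apply conn_refl. Qed.

Lemma root_eq u v : conn u v -> root u = root v.
Proof.
  intro H. unfold root.
  assert (E : (fun z => conn z u) = (fun z => conn z v)).
  { apply functional_extensionality. intro z. apply propositional_extensionality. split; intro.
    eapply conn_trans; eauto. eapply conn_trans; eauto. apply conn_sym; auto. }
  rewrite E. f_equal. apply proof_irrelevance.
Qed.

Lemma root_root u : root (root u) = root u.
Proof. apply root_eq. apply root_conn. Qed.

Lemma root_letter b : T1 le b -> root (bd0 b) = root (bd1 b).
Proof. intro H. symmetry. apply root_eq. exists [b]. split. constructor; auto. apply walk_single. Qed.

Definition tau (u : K) : word :=
  if dec (u = root u) then [] else proj1_sig (constructive_indefinite_description _ (root_conn u)).

Lemma tau_spec u : is_word le (tau u) /\ walk (root u) u (tau u).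
Proof.
  unfold tau. destruct (dec (u = root u)).
  - split. constructor. rewrite <- e. constructor.
  - destruct (constructive_indefinite_description _ (root_conn u)) as [w H]. simpl. auto.
Qed.

Lemma tau_word u : is_word le (tau u).
Proof. apply tau_spec. Qed.
Lemma tau_walk u : walk (root u) u (tau u).
Proof. apply tau_spec. Qed.
Lemma tau_root u : tau (root u) = [].
Proof. unfold tau. destruct (dec (root u = root (root u))); auto. rewrite root_root in n. congruence. Qed.

Definition swap (r a u : K) : K :=
  if dec (u = r) then a else if dec (u = a) then r else u.

Lemma swap_inv r a u : swap r a (swap r a u) = u.
Proof.
  unfold swap. destruct (dec (u = r)); subst.
  - destruct (dec (a = r)); subst; auto. destruct (dec (a = a)); auto. congruence.
  - destruct (dec (u = a)); subst.
    + destruct (dec (r = r)); congruence.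
    + destruct (dec (u = r)); try congruence. destruct (dec (u = a)); congruence.
Qed.

Lemma swap_eq_r r a u : swap r a u = r <-> u = a.
Proof.
  unfold swap. destruct (dec (u = r)); subst.
  - split; intro; subst; auto.
  - destruct (dec (u = a)); subst. tauto. split; intro; congruence.
Qed.

Lemma swap_root r a u : root a = r -> root r = r -> root (swap r a u) = root u.
Proof.
  intros H1 H2. unfold swap. destruct (dec (u = r)); subst.
  - congruence.
  - destruct (dec (u = a)); subst; congruence.
Qed.

Definition rb (b : simplex K) : K := root (bd1 b).

Definition step (b : simplex K) (u : K) : K := swap (rb b) (bd0 b) (swap (rb b) (bd1 b) u).

Definition Eb (b : simplex K) : word := tau (bd1 b) ++ [b] ++ winv (tau (bd0 b)).

Definition inc (b : simplex K) (u : K) : word :=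
  if dec (swap (rb b) (bd1 b) u = rb b) then Eb b else [].

Fixpoint lay (w : word) (u : K) : K :=
  match w with [] => u | b :: w' => lay w' (step b u) end.

Fixpoint Yf (w : word) (u : K) : word :=
  match w with [] => [] | b :: w' => inc b u ++ Yf w' (step b u) end.

Lemma lay_app (w1 w2 : word) u : lay (w1 ++ w2) u = lay w2 (lay w1 u).
Proof. revert u; induction w1; simpl; auto. Qed.

Lemma Yf_app (w1 w2 : word) u : Yf (w1 ++ w2) u = Yf w1 u ++ Yf w2 (lay w1 u).
Proof. revert u; induction w1; intros; simpl; auto. rewrite IHw1, app_assoc. auto. Qed.

Lemma Eb_word b : T1 le b -> is_word le (Eb b).
Proof. intro. unfold Eb. apply is_word_app2. apply tau_word. apply is_word_app2.
  constructor; auto. apply is_word_winv, tau_word. Qed.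

Lemma inc_word b u : T1 le b -> is_word le (inc b u).
Proof. intro. unfold inc. destruct dec; auto using Eb_word. constructor. Qed.

Lemma Yf_word (w : word) u : is_word le w -> is_word le (Yf w u).
Proof. revert u; induction w; intros u H; simpl. constructor.
  inversion H; subst. apply is_word_app2; auto using inc_word. Qed.

Lemma rb_opp b : T1 le b -> rb (opp b) = rb b.
Proof. intro. unfold rb, opp. simpl. apply root_letter; auto. Qed.

Lemma cancel_lay b u : T1 le b -> lay [b; opp b] u = u.
Proof.
  intro H. simpl. unfold step. rewrite rb_opp; auto. simpl. rewrite !swap_inv. auto.
Qed.

Lemma cancel_Yf b u : T1 le b -> W (Yf [b; opp b] u) [].
Proof.
  intro H. simpl. rewrite app_nil_r. unfold inc, step. rewrite rb_opp; auto. simpl.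
  rewrite swap_inv. destruct (dec (swap (rb b) (bd1 b) u = rb b)).
  - unfold Eb. rewrite <- !app_assoc. simpl.
    eapply W_trans. apply W_app_l. apply W_cons. apply W_mid. apply tau_word.
    eapply W_trans. apply W_cancel; auto. apply W_inv_r. apply tau_word.
  - apply W_refl.
Qed.

Lemma lay_Yf_W (w w' : word) : W w w' -> forall u, lay w u = lay w' u /\ W (Yf w u) (Yf w' u).
Proof.
  revert w w'. apply (@W_ind_gen K le (fun w w' => forall u, lay w u = lay w' u /\ W (Yf w u) (Yf w' u))).
  - intros. split; auto. apply W_refl.
  - intros u v H x. destruct (H x). split; auto. apply W_sym; auto.
  - intros u v w H1 H2 x. destruct (H1 x), (H2 x). split. congruence. eapply W_trans; eauto.
  - intros l1 l2 b Hb u. change (b :: opp b :: l2) with ([b; opp b] ++ l2).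
    rewrite !lay_app, !Yf_app, ?lay_app. rewrite cancel_lay; auto. split; auto.
    apply W_app_l. change (Yf l2 (lay l1 u)) with ([] ++ Yf l2 (lay l1 u)).
    apply W_app_r. apply cancel_Yf; auto.
Qed.

Lemma walk_tele (w : word) a c : is_word le w -> walk a c w -> forall u,
  root c = root a /\
  lay w u = swap (root a) c (swap (root a) a u) /\
  W (Yf w u) (if dec (swap (root a) a u = root a) then tau a ++ w ++ winv (tau c) else []).
Proof.
  intros Hw H. induction H; intros u.
  - split; auto. split. rewrite swap_inv; auto.
    destruct dec. simpl. apply W_sym. apply W_inv_r. apply tau_word. apply W_refl.
  - inversion Hw; subst. destruct (IHwalk H4 (step b u)) as [R1 [R2 R3]].
    assert (Rb : root (bd0 b) = root (bd1 b)) by (apply root_letter; auto).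
    assert (Sb : swap (root (bd0 b)) (bd0 b) (step b u) = swap (root (bd1 b)) (bd1 b) u).
    { unfold step, rb. rewrite Rb, swap_inv. auto. }
    split. congruence. split.
    + simpl. rewrite R2, Sb, Rb. auto.
    + simpl. rewrite Sb, Rb in R3. unfold inc. unfold rb. destruct dec.
      * eapply W_trans. apply W_app_l. apply R3. unfold Eb. rewrite <- !app_assoc. simpl.
        apply W_app_l. apply W_cons. apply W_mid. apply tau_word.
      * simpl. auto.
Qed.

Lemma loop_tele (p : word) v : is_word le p -> walk v v p -> forall u,
  lay p u = u /\ W (Yf p u) (if dec (u = v) then tau v ++ p ++ winv (tau v) else []).
Proof.
  intros H1 H2 u. destruct (walk_tele H1 H2 u) as [_ [A B]]. split.
  rewrite A, swap_inv; auto.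
  eapply W_trans. apply B. destruct dec as [e|n]; destruct dec as [e'|n'].
  apply W_refl. apply swap_eq_r in e. congruence. subst. exfalso. apply n. apply swap_eq_r. auto.
  apply W_refl.
Qed.

Lemma isloop_walk p : is_loop le p -> exists v, walk v v p.
Proof. intros [_ [o Ho]]. apply path_from_walk in Ho. exists o. apply Ho. exact le. Qed.

Lemma L_lay l : Lgrp le l -> forall u, lay l u = u.
Proof.
  intro H. induction H; intros x.
  - destruct (isloop_walk H) as [v Hv]. apply (loop_tele (loop_word H) Hv x).
  - auto.
  - unfold wmul. rewrite lay_app. rewrite IHgen2, IHgen1. auto.
  - assert (E := lay_Yf_W (W_inv_l (L_word H)) x).
    destruct E as [E _]. rewrite lay_app, IHgen in E. simpl in E. auto.
  - destruct (lay_Yf_W H0 x) as [E _]. rewrite <- E. auto.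
Qed.

Lemma W_solve (x y : word) : W (x ++ y) [] -> is_word le x -> W y (winv x).
Proof.
  intros H Hx. apply W_trans with ((winv x ++ x) ++ y).
  apply W_sym. change y with ([] ++ y) at 2. apply W_app_r. apply W_inv_l; auto.
  rewrite <- app_assoc. rewrite <- (app_nil_r (winv x)) at 2. apply W_app_l. auto.
Qed.

Lemma L_Yf_winv l : Lgrp le l -> forall u, W (Yf (winv l) u) (winv (Yf l u)).
Proof.
  intros H u. apply W_solve. 2: apply Yf_word; apply L_word; auto.
  rewrite <- (L_lay H u) at 2. rewrite <- Yf_app.
  destruct (lay_Yf_W (W_inv_r (L_word H)) u) as [_ E]. auto.
Qed.

Lemma L_Yf_app l1 l2 u : Lgrp le l1 -> Yf (l1 ++ l2) u = Yf l1 u ++ Yf l2 u.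
Proof. intro H. rewrite Yf_app, L_lay; auto. Qed.

Lemma Yf_walk (w : word) u : is_word le w ->
  walk (root u) (root u) (Yf w u) /\ root (lay w u) = root u.
Proof.
  revert u. induction w as [|b w IH]; intros u Hw; simpl.
  - split; auto. constructor.
  - inversion Hw; subst.
    assert (Rb : root (bd0 b) = root (bd1 b)) by (apply root_letter; auto).
    assert (Rs : root (step b u) = root u).
    { unfold step, rb. rewrite swap_root; auto. rewrite swap_root; auto. apply root_root.
      apply root_root. }
    destruct (IH (step b u) H2) as [A B]. rewrite Rs in A, B. split; auto.
    eapply walk_app2; eauto. unfold inc. destruct dec as [e|n]; [|constructor].
    apply swap_eq_r in e. subst. unfold Eb, rb.
    eapply walk_app2. apply tau_walk. eapply walk_app2. apply walk_single.
    rewrite <- Rb. apply walk_winv. apply tau_walk.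
Qed.

End S3.


Section S4.
Variable K : Type.
Variable le : K -> K -> Prop.
Variable perp : K -> K -> Prop.

Notation word := (word K).
Notation W := (wequiv le).

Lemma reduce_walk n : forall (p : word) a c, length p <= n -> is_word le p -> walk a c p ->
  exists r, W p r /\ reduced r /\ is_word le r /\ walk a c r.
Proof.
  induction n; intros p a c Hl Hw Hp.
  - destruct p; simpl in Hl; [|lia]. exists []. split. apply W_refl. split.
    intros [l1 [l2 [b E]]]. destruct l1; discriminate. auto.
  - destruct (classic (reduced p)) as [R|R].
    + exists p. split. apply W_refl. auto.
    + unfold reduced in R. apply NNPP in R. destruct R as [l1 [l2 [b E]]]. subst.
      assert (Hb : T1 le b /\ is_word le (l1 ++ l2)).
      { apply is_word_app in Hw. destruct Hw as [H1 H2]. unfold is_word in H2.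
        rewrite !Forall_cons_iff in H2. split. tauto. apply is_word_app2; tauto. }
      destruct Hb as [Hb Hw'].
      assert (Hp' : walk a c (l1 ++ l2)).
      { eapply walk_cancel; eauto. }
      destruct (IHn (l1 ++ l2) a c) as [r [H1 [H2 [H3 H4]]]]; auto.
      rewrite length_app in *. simpl in Hl. lia.
      exists r. split; auto. eapply W_trans. apply W_cancel; auto. auto.
Qed.

Lemma loop_trivial_or (p : word) o : is_word le p -> walk o o p ->
  W p [] \/ exists b r, W p (b :: r) /\ reduced (b :: r) /\ T1 le b /\ bd1 b = o.
Proof.
  intros Hw Hp. destruct (@reduce_walk (length p) p o o) as [r [H1 [H2 [H3 H4]]]]; auto.
  destruct r as [|b r]. auto. right. exists b, r. inversion H3; subst. inversion H4; subst. auto.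
Qed.

Lemma disjoint_Yf (HK : causal_poset le perp) p1 p2 u :
  is_loop le p1 -> is_loop le p2 -> causally_disjoint le perp p1 p2 ->
  W (Yf le p1 u) [] \/ W (Yf le p2 u) [].
Proof.
  intros L1 L2 [o1 [o2 [Hp [S1 S2]]]].
  destruct (isloop_walk L1) as [v1 H1]. destruct (isloop_walk L2) as [v2 H2].
  pose proof (loop_tele (loop_word L1) H1 u) as [_ Y1].
  pose proof (loop_tele (loop_word L2) H2 u) as [_ Y2].
  destruct (dec (u = v1)) as [e1|n1]; [|left; auto].
  destruct (dec (u = v2)) as [e2|n2]; [|right; auto].
  destruct (loop_trivial_or (loop_word L1) H1) as [T1'|[b1 [r1 [E1 [R1 [B1 F1]]]]]].
  { left. destruct (lay_Yf_W T1' u) as [_ X]. eauto. }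
  destruct (loop_trivial_or (loop_word L2) H2) as [T2'|[b2 [r2 [E2 [R2 [B2 F2]]]]]].
  { right. destruct (lay_Yf_W T2' u) as [_ X]. eauto. }
  exfalso.
  destruct HK as [_ [_ [Htr [_ [Hirr [Hsym Hdn]]]]]].
  assert (A1 : le u o1).
  { apply Htr with (supp b1). rewrite e1, <- F1. apply B1. apply (S1 _ R1 E1). left; auto. }
  assert (A2 : le u o2).
  { apply Htr with (supp b2). rewrite e2, <- F2. apply B2. apply (S2 _ R2 E2). left; auto. }
  apply (Hirr u). apply Hdn with o2; auto. apply Hsym. apply Hdn with o1; auto.
Qed.

Lemma core_Yf (HK : causal_poset le perp) p1 p2 u :
  is_loop le p1 -> is_loop le p2 -> causally_disjoint le perp p1 p2 ->
  W (Yf le (winv p2 ++ winv p1 ++ p2 ++ p1) u) [].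
Proof.
  intros L1 L2 D. apply L_loop in L1 as L1'. apply L_loop in L2 as L2'.
  assert (Wd1 := Yf_word u (loop_word L1)). assert (Wd2 := Yf_word u (loop_word L2)).
  rewrite !L_Yf_app; auto using L_winv, L_app.
  eapply W_trans. apply W_app. apply L_Yf_winv; auto. apply W_app. apply L_Yf_winv; auto. apply W_refl.
  destruct (disjoint_Yf HK u L1 L2 D) as [Z|Z].
  - eapply W_trans. apply W_app_l. apply W_app. apply W_winv. apply Z. apply W_app_l. apply Z.
    simpl. rewrite app_nil_r. apply W_inv_l; auto.
  - eapply W_trans. apply W_app. apply W_winv. apply Z. apply W_app_l. apply W_app_r. apply Z.
    simpl. apply W_inv_l; auto.
Qed.

Lemma CL_Yf (HK : causal_poset le perp) c : CL le perp c -> forall u, W (Yf le c u) [].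
Proof.
  intro H. induction H; intro x.
  - destruct H as [w0 [p1 [p2 [Hw [L1 [L2 [D E]]]]]]]. subst. rewrite comm_eq.
    apply L_word in Hw as Hw'.
    replace (winv w0 ++ winv p2 ++ winv p1 ++ p2 ++ p1 ++ w0) with
      (winv w0 ++ (winv p2 ++ winv p1 ++ p2 ++ p1) ++ w0) by (rewrite <- !app_assoc; reflexivity).
    assert (Lc : Lgrp le (winv p2 ++ winv p1 ++ p2 ++ p1)).
    { apply L_loop in L1. apply L_loop in L2. repeat apply L_app; auto using L_winv. }
    rewrite L_Yf_app; [|apply L_winv; auto]. rewrite L_Yf_app; [|auto].
    eapply W_trans. apply W_app. apply L_Yf_winv; auto. apply W_app_r. apply core_Yf; auto.
    simpl. apply W_inv_l. apply Yf_word. auto.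
  - apply W_refl.
  - unfold wmul. rewrite L_Yf_app. 2: apply (CL_L (perp:=perp)); auto.
    change (@nil (simplex K)) with (@nil (simplex K) ++ []). apply W_app; auto.
  - eapply W_trans. apply L_Yf_winv. apply (CL_L (perp:=perp)); auto. change (@nil (simplex K)) with (winv (@nil (simplex K))).
    apply W_winv; auto.
  - destruct (lay_Yf_W H0 x) as [_ X]. eapply W_trans. apply W_sym; eauto. auto.
Qed.

End S4.


Section S5.
Variable K : Type.
Variable le : K -> K -> Prop.
Variable perp : K -> K -> Prop.

Notation word := (word K).
Notation W := (wequiv le).
Notation L := (Lgrp le).

Definition Mrel (x y : word) : Prop := L x /\ L y /\ CL le perp (x ++ winv y).

Lemma CL_W_nil x : W x [] -> CL le perp x.
Proof. intro H. eapply gen_eq. apply gen_one. apply W_sym; auto. Qed.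

Lemma Mrel_refl x : L x -> Mrel x x.
Proof. intro H. split; auto. split; auto. apply CL_W_nil. apply W_inv_r. apply L_word; auto. Qed.

Lemma Mrel_sym x y : Mrel x y -> Mrel y x.
Proof. intros [H1 [H2 H3]]. split; auto. split; auto.
  replace (y ++ winv x) with (winv (x ++ winv y)). apply gen_inv; auto.
  rewrite winv_app, winv_winv. auto. Qed.

Lemma Mrel_trans x y z : Mrel x y -> Mrel y z -> Mrel x z.
Proof. intros [H1 [H2 H3]] [_ [H4 H5]]. split; auto. split; auto.
  eapply gen_eq. apply gen_app. exact H3. exact H5.
  rewrite <- app_assoc. apply W_app_l. rewrite app_assoc. change (winv z) with ([] ++ winv z) at 2.
  apply W_app_r. apply W_inv_l. apply L_word; auto. Qed.

Lemma Mrel_W x y : L x -> W x y -> Mrel x y.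
Proof. intros H E. split; auto. split. eapply gen_eq; eauto.
  apply CL_W_nil. eapply W_trans. apply W_app_l. apply W_winv. apply W_sym. exact E.
  apply W_inv_r. apply L_word; auto. Qed.

Lemma Mrel_app x x' y y' : Mrel x x' -> Mrel y y' -> Mrel (x ++ y) (x' ++ y').
Proof.
  intros [H1 [H2 H3]] [H4 [H5 H6]]. split. apply L_app; auto. split. apply L_app; auto.
  assert (C := CL_conj' H6 H1).
  eapply gen_eq. apply gen_app. exact C. exact H3.
  rewrite winv_app. rewrite <- !app_assoc. apply W_app_l. apply W_app_l. apply W_app_l.
  apply W_mid. apply L_word; auto.
Qed.

Lemma Mrel_winv x x' : Mrel x x' -> Mrel (winv x) (winv x').
Proof.
  intros H. apply Mrel_sym in H as H'. destruct H' as [H1 [H2 H3]].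
  split. apply L_winv; auto. split. apply L_winv; auto.
  assert (C := CL_conj H3 H2). eapply gen_eq. exact C. rewrite winv_winv.
  rewrite <- !app_assoc. apply W_app_l. rewrite <- (app_nil_r x') at 2. apply W_app_l. apply W_inv_l.
  apply L_word; auto.
Qed.

Definition M := {P : word -> Prop | exists x, L x /\ P = Mrel x}.

Definition cls (x : word) : M.
Proof.
  destruct (dec (L x)) as [H|H].
  - exists (Mrel x). exists x. auto.
  - exists (Mrel []). exists []. split; auto. apply L_nil.
Defined.

Lemma Mrel_ext x y : Mrel x y -> Mrel x = Mrel y.
Proof. intro H. apply functional_extensionality. intro z. apply propositional_extensionality.
  split; intro. eapply Mrel_trans; eauto. apply Mrel_sym; auto. eapply Mrel_trans; eauto. Qed.

Lemma cls_eq x y : L x -> L y -> (cls x = cls y <-> Mrel x y).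
Proof.
  intros Hx Hy. unfold cls. destruct (dec (L x)); [|tauto]. destruct (dec (L y)); [|tauto].
  split.
  - intro E. apply (f_equal (@proj1_sig _ _)) in E. simpl in E. rewrite E. apply Mrel_refl; auto.
  - intro H. apply Mrel_ext in H. apply eq_sig_hprop. intros; apply proof_irrelevance. simpl. auto.
Qed.

Lemma cls_surj (q : M) : exists x, L x /\ q = cls x.
Proof.
  destruct q as [P [x [Hx E]]]. exists x. split; auto. unfold cls. destruct (dec (L x)); [|tauto].
  apply eq_sig_hprop. intros; apply proof_irrelevance. simpl. auto.
Qed.

Definition rep (q : M) : word := proj1_sig (constructive_indefinite_description _ (cls_surj q)).
Lemma rep_spec q : L (rep q) /\ q = cls (rep q).
Proof. unfold rep. destruct constructive_indefinite_description. simpl. auto. Qed.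

Lemma rep_cls x : L x -> Mrel (rep (cls x)) x.
Proof. intro H. destruct (rep_spec (cls x)) as [H1 H2]. apply cls_eq; auto. Qed.

Lemma cls_W x y : L x -> W x y -> cls x = cls y.
Proof. intros. apply cls_eq; auto. eapply gen_eq; eauto. apply Mrel_W; auto. Qed.

Definition Mmul (p q : M) : M := cls (rep p ++ rep q).
Definition Minv (q : M) : M := cls (winv (rep q)).
Definition M1 : M := cls [].

Lemma Mmul_cls x y : L x -> L y -> Mmul (cls x) (cls y) = cls (x ++ y).
Proof. intros. unfold Mmul. apply cls_eq. apply L_app; apply rep_spec. apply L_app; auto.
  apply Mrel_app; apply rep_cls; auto. Qed.

Lemma Minv_cls x : L x -> Minv (cls x) = cls (winv x).
Proof. intros. unfold Minv. apply cls_eq. apply L_winv, rep_spec. apply L_winv; auto.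
  apply Mrel_winv; apply rep_cls; auto. Qed.

Lemma Massoc p q r : Mmul p (Mmul q r) = Mmul (Mmul p q) r.
Proof.
  destruct (cls_surj p) as [x [Hx ->]]. destruct (cls_surj q) as [y [Hy ->]].
  destruct (cls_surj r) as [z [Hz ->]]. rewrite !Mmul_cls; auto using L_app.
  rewrite app_assoc; auto.
Qed.

Lemma Mmul1l q : Mmul M1 q = q.
Proof. destruct (cls_surj q) as [x [Hx ->]]. unfold M1. rewrite Mmul_cls; auto using L_nil. Qed.

Lemma Mmul1r q : Mmul q M1 = q.
Proof. destruct (cls_surj q) as [x [Hx ->]]. unfold M1. rewrite Mmul_cls; auto using L_nil.
  rewrite app_nil_r; auto. Qed.

Lemma Minvr q : Mmul q (Minv q) = M1.
Proof. destruct (cls_surj q) as [x [Hx ->]]. unfold M1. rewrite Minv_cls, Mmul_cls; auto using L_winv.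
  apply cls_W. apply L_app; auto using L_winv. apply W_inv_r. apply L_word; auto. Qed.

Lemma Minvl q : Mmul (Minv q) q = M1.
Proof. destruct (cls_surj q) as [x [Hx ->]]. unfold M1. rewrite Minv_cls, Mmul_cls; auto using L_winv.
  apply cls_W. apply L_app; auto using L_winv. apply W_inv_l. apply L_word; auto. Qed.

Lemma cls_CL x : CL le perp x -> cls x = M1.
Proof. intro H. unfold M1. apply cls_eq. apply (CL_L H). apply L_nil.
  split. apply (CL_L H). split. apply L_nil. simpl. rewrite app_nil_r; auto. Qed.

Lemma cls_M1 x : L x -> cls x = M1 -> CL le perp x.
Proof. intros H E. unfold M1 in E. apply cls_eq in E; auto using L_nil.
  destruct E as [_ [_ E]]. simpl in E. rewrite app_nil_r in E. auto. Qed.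

End S5.


Section S6.
Variable K : Type.
Variable le : K -> K -> Prop.
Variable perp : K -> K -> Prop.
Variable HK : causal_poset le perp.

Notation word := (word K).
Notation W := (wequiv le).
Notation L := (Lgrp le).
Notation M := (M le perp).
Notation cls := (cls le perp).
Notation "p ** q" := (Mmul p q) (at level 40, left associativity).

Lemma walk_L (w : word) v : is_word le w -> walk v v w -> L w.
Proof. intros H1 H2. destruct w. apply L_nil. apply L_loop. split; auto. exists v.
  apply (path_from_walk le). split; auto. discriminate. Qed.

Definition rr (u : K) (m : word) : word := winv (tau le u) ++ Yf le m u ++ tau le u.

Lemma conj_walk (w : word) r v t : is_word le w -> walk r r w -> is_word le t -> walk r v t ->
  is_word le (winv t ++ w ++ t) /\ walk v v (winv t ++ w ++ t).
Proof. intros. split. repeat apply is_word_app2; auto using is_word_winv.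
  eapply walk_app2. apply walk_winv; eauto. eapply walk_app2; eauto. Qed.

Lemma conj_walk' (w : word) r v t : is_word le w -> walk v v w -> is_word le t -> walk r v t ->
  is_word le (t ++ w ++ winv t) /\ walk r r (t ++ w ++ winv t).
Proof. intros. split. repeat apply is_word_app2; auto using is_word_winv.
  eapply walk_app2. eauto. eapply walk_app2; eauto. apply walk_winv; auto. Qed.

Lemma rr_walk u m : is_word le m -> is_word le (rr u m) /\ walk u u (rr u m).
Proof. intro H. unfold rr. destruct (Yf_walk u H) as [A _].
  apply conj_walk with (root le u); auto using Yf_word, tau_word, tau_walk. Qed.

Lemma rr_L u m : is_word le m -> L (rr u m).
Proof. intro H. destruct (rr_walk u H). eapply walk_L; eauto. Qed.

Lemma W_conj (a b t : word) : W a b -> W (t ++ a ++ winv t) (t ++ b ++ winv t).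
Proof. intro. apply W_app_l. apply W_app_r. auto. Qed.

Lemma W_conj_app (a b t : word) : is_word le t ->
  W (winv t ++ (a ++ b) ++ t) ((winv t ++ a ++ t) ++ (winv t ++ b ++ t)).
Proof. intro. rewrite <- !app_assoc. apply W_app_l. apply W_app_l. apply W_sym.
  apply W_mid2. auto. Qed.

Lemma W_conj_app' (a b t : word) : is_word le t ->
  W (t ++ (a ++ b) ++ winv t) ((t ++ a ++ winv t) ++ (t ++ b ++ winv t)).
Proof. intro. rewrite <- !app_assoc. apply W_app_l. apply W_app_l. apply W_sym.
  apply W_mid. auto. Qed.

Lemma rr_app u x y : L x -> W (rr u (x ++ y)) (rr u x ++ rr u y).
Proof. intro. unfold rr. rewrite L_Yf_app; auto. apply W_conj_app. apply tau_word. Qed.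

Lemma W_solve2 (a b : word) : W (a ++ winv b) [] -> is_word le b -> W a b.
Proof. intros H Hb. apply W_trans with ((a ++ winv b) ++ b).
  rewrite <- app_assoc. apply W_sym. rewrite <- (app_nil_r a) at 2. apply W_app_l. apply W_inv_l; auto.
  apply (W_app_r (u' := [])). auto. Qed.

Lemma rr_Mrel u x y : Mrel le perp x y -> W (rr u x) (rr u y).
Proof.
  intros [Hx [Hy H]]. unfold rr. apply W_app_l. apply W_app_r.
  assert (E := CL_Yf HK H u). rewrite L_Yf_app in E; auto.
  apply W_solve2. 2: apply Yf_word, L_word; auto.
  eapply W_trans. apply W_app_l. apply W_sym. apply L_Yf_winv; auto. auto.
Qed.

Lemma rr_walkid u (w : word) : is_word le w -> walk u u w -> W (rr u w) w.
Proof. intros H1 H2. unfold rr. destruct (loop_tele H1 H2 u) as [_ E].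
  destruct (dec (u = u)); [|congruence]. eapply W_trans. apply W_app_l. apply W_app_r. apply E.
  rewrite <- !app_assoc. eapply W_trans. apply W_mid. apply tau_word.
  rewrite <- (app_nil_r w) at 2. apply W_app_l. apply W_inv_l. apply tau_word. Qed.

Definition Mrho (u : K) (q : M) : M := cls (rr u (rep q)).

Lemma Mrho_cls u x : L x -> Mrho u (cls x) = cls (rr u x).
Proof. intro H. unfold Mrho. destruct (rep_spec (cls x)) as [H1 _].
  apply cls_eq. apply rr_L, L_word; auto. apply rr_L, L_word; auto.
  apply Mrel_W. apply rr_L, L_word; auto. apply rr_Mrel. apply rep_cls; auto. Qed.

Definition Mth (v : K) (q : M) : M :=
  cls (winv (tau le v) ++ rr (root le v) (rep q) ++ tau le v).
Definition Mth' (v : K) (q : M) : M :=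
  cls (tau le v ++ rr v (rep q) ++ winv (tau le v)).

Lemma th_walk v x : is_word le x ->
  is_word le (winv (tau le v) ++ rr (root le v) x ++ tau le v) /\
  walk v v (winv (tau le v) ++ rr (root le v) x ++ tau le v).
Proof. intro. destruct (rr_walk (root le v) H).
  apply conj_walk with (root le v); auto using tau_word, tau_walk. Qed.

Lemma th'_walk v x : is_word le x ->
  is_word le (tau le v ++ rr v x ++ winv (tau le v)) /\
  walk (root le v) (root le v) (tau le v ++ rr v x ++ winv (tau le v)).
Proof. intro. destruct (rr_walk v H).
  apply conj_walk' with v; auto using tau_word, tau_walk. Qed.

Lemma Lw x : L x -> is_word le x.
Proof. apply L_word. Qed.

Lemma Mth_cls v x : L x -> Mth v (cls x) = cls (winv (tau le v) ++ rr (root le v) x ++ tau le v).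
Proof. intro H. unfold Mth. destruct (rep_spec (cls x)) as [H1 _].
  destruct (th_walk v (Lw H1)). destruct (th_walk v (Lw H)).
  apply cls_eq; eauto using walk_L. apply Mrel_W; eauto using walk_L.
  apply W_app_l. apply W_app_r. apply rr_Mrel. apply rep_cls; auto. Qed.

Lemma Mth'_cls v x : L x -> Mth' v (cls x) = cls (tau le v ++ rr v x ++ winv (tau le v)).
Proof. intro H. unfold Mth'. destruct (rep_spec (cls x)) as [H1 _].
  destruct (th'_walk v (Lw H1)). destruct (th'_walk v (Lw H)).
  apply cls_eq; eauto using walk_L. apply Mrel_W; eauto using walk_L.
  apply W_app_l. apply W_app_r. apply rr_Mrel. apply rep_cls; auto. Qed.

Lemma Mrho_hom u p q : Mrho u (p ** q) = Mrho u p ** Mrho u q.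
Proof.
  destruct (cls_surj p) as [x [Hx ->]]. destruct (cls_surj q) as [y [Hy ->]].
  rewrite Mmul_cls; auto. rewrite !Mrho_cls; auto using L_app. rewrite Mmul_cls; auto using rr_L, Lw.
  apply cls_W. apply rr_L, Lw, L_app; auto. apply rr_app; auto.
Qed.

Lemma Mrho_idem u q : Mrho u (Mrho u q) = Mrho u q.
Proof.
  destruct (cls_surj q) as [x [Hx ->]]. rewrite !Mrho_cls; auto using rr_L, Lw.
  destruct (rr_walk u (Lw Hx)). apply cls_W. apply rr_L; auto. apply rr_walkid; auto.
Qed.

Lemma Mth_hom v p q : Mth v (p ** q) = Mth v p ** Mth v q.
Proof.
  destruct (cls_surj p) as [x [Hx ->]]. destruct (cls_surj q) as [y [Hy ->]].
  rewrite Mmul_cls; auto. rewrite !Mth_cls; auto using L_app.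
  destruct (th_walk v (Lw Hx)). destruct (th_walk v (Lw Hy)).
  rewrite Mmul_cls; eauto using walk_L. destruct (th_walk v (Lw (L_app Hx Hy))).
  apply cls_W. eauto using walk_L.
  eapply W_trans. apply W_app_l. apply W_app_r. apply rr_app; auto. apply W_conj_app. apply tau_word.
Qed.

Lemma Mth'_hom v p q : Mth' v (p ** q) = Mth' v p ** Mth' v q.
Proof.
  destruct (cls_surj p) as [x [Hx ->]]. destruct (cls_surj q) as [y [Hy ->]].
  rewrite Mmul_cls; auto. rewrite !Mth'_cls; auto using L_app.
  destruct (th'_walk v (Lw Hx)). destruct (th'_walk v (Lw Hy)).
  rewrite Mmul_cls; eauto using walk_L. destruct (th'_walk v (Lw (L_app Hx Hy))).
  apply cls_W. eauto using walk_L.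
  eapply W_trans. apply W_app_l. apply W_app_r. apply rr_app; auto. apply W_conj_app'. apply tau_word.
Qed.

Lemma Mrho_Mth v q : Mrho v (Mth v q) = Mth v q.
Proof.
  destruct (cls_surj q) as [x [Hx ->]]. rewrite Mth_cls; auto.
  destruct (th_walk v (Lw Hx)). rewrite Mrho_cls; eauto using walk_L.
  apply cls_W. apply rr_L; auto. apply rr_walkid; auto.
Qed.

Lemma Mrho_Mth' v q : Mrho (root le v) (Mth' v q) = Mth' v q.
Proof.
  destruct (cls_surj q) as [x [Hx ->]]. rewrite Mth'_cls; auto.
  destruct (th'_walk v (Lw Hx)). rewrite Mrho_cls; eauto using walk_L.
  apply cls_W. apply rr_L; auto. apply rr_walkid; auto.
Qed.

Lemma Mth'_Mth v q : Mth' v (Mth v q) = Mrho (root le v) q.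
Proof.
  destruct (cls_surj q) as [x [Hx ->]]. rewrite Mth_cls; auto.
  destruct (th_walk v (Lw Hx)). rewrite Mth'_cls; eauto using walk_L.
  rewrite Mrho_cls; auto. destruct (rr_walk (root le v) (Lw Hx)).
  destruct (th'_walk v H).
  apply cls_W. eauto using walk_L.
  eapply W_trans. apply W_app_l. apply W_app_r. apply rr_walkid; auto.
  rewrite <- !app_assoc. eapply W_trans. apply W_mid2. apply tau_word.
  rewrite <- (app_nil_r (rr _ x)) at 2. apply W_app_l. apply W_inv_r. apply tau_word.
Qed.

Lemma Mth_Mth' v q : Mth v (Mth' v q) = Mrho v q.
Proof.
  destruct (cls_surj q) as [x [Hx ->]]. rewrite Mth'_cls; auto.
  destruct (th'_walk v (Lw Hx)). rewrite Mth_cls; eauto using walk_L.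
  rewrite Mrho_cls; auto. destruct (rr_walk v (Lw Hx)).
  destruct (th_walk v H).
  apply cls_W. eauto using walk_L.
  eapply W_trans. apply W_app_l. apply W_app_r. apply rr_walkid; auto.
  rewrite <- !app_assoc. eapply W_trans. apply W_mid. apply tau_word.
  rewrite <- (app_nil_r (rr _ x)) at 2. apply W_app_l. apply W_inv_l. apply tau_word.
Qed.

End S6.


Section S7.
Variable K : Type.
Variable le : K -> K -> Prop.
Variable perp : K -> K -> Prop.
Variable HK : causal_poset le perp.

Notation word := (word K).
Notation W := (wequiv le).
Notation L := (Lgrp le).
Notation M := (M le perp).
Notation cls := (cls le perp).
Notation "p ** q" := (Mmul p q) (at level 40, left associativity).
Notation inv := (@Minv K le perp).
Notation one := (@M1 K le perp).
Notation rho := (@Mrho K le perp).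

Lemma Mcancel_l (a b c : M) : a ** b = a ** c -> b = c.
Proof. intro E. rewrite <- (Mmul1l b), <- (Mmul1l c), <- (Minvl a), <- !Massoc, E. auto. Qed.

Lemma rho_one u : rho u one = one.
Proof. apply (Mcancel_l (rho u one)). rewrite <- Mrho_hom; auto. rewrite !Mmul1r. auto. Qed.

Lemma rho_inv u (q : M) : rho u (inv q) = inv (rho u q).
Proof. apply (Mcancel_l (rho u q)). rewrite <- Mrho_hom; auto. rewrite !Minvr. apply rho_one. Qed.

Lemma Minv_mul (a b : M) : inv (a ** b) = inv b ** inv a.
Proof. apply (Mcancel_l (a ** b)). rewrite Minvr. rewrite Massoc, <- (Massoc a b), Minvr, Mmul1r, Minvr. auto. Qed.

Lemma Minv_inv (a : M) : inv (inv a) = a.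
Proof. apply (Mcancel_l (inv a)). rewrite Minvr, Minvl. auto. Qed.

Definition kk u (m : M) := m ** inv (rho u m).

Lemma k1 u (m : M) : rho u (kk u m) = one.
Proof. unfold kk. rewrite Mrho_hom, rho_inv, Mrho_idem; auto. apply Minvr. Qed.

Lemma k2 u (m : M) : kk u m ** rho u m = m.
Proof. unfold kk. rewrite <- Massoc, Minvl, Mmul1r. auto. Qed.

Lemma rho_ka u (k a : M) : rho u k = one -> rho u a = a -> rho u (k ** a) = a.
Proof. intros. rewrite Mrho_hom, H, H0, Mmul1l; auto. Qed.

Lemma k3 u (k a : M) : rho u k = one -> rho u a = a -> kk u (k ** a) = k.
Proof. intros. unfold kk. rewrite rho_ka; auto. rewrite <- Massoc, Minvr, Mmul1r. auto. Qed.

Lemma k4 u (m a : M) : rho u a = a -> kk u (m ** a) = kk u m.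
Proof. intros. unfold kk. rewrite Mrho_hom, H, Minv_mul; auto.
  rewrite <- Massoc, (Massoc a), Minvr, Mmul1l. auto. Qed.

Definition Om := (M * (nat -> M))%type.

Definition shift u (k : M) (xi : nat -> M) : nat -> M := fun n =>
  match n with 0 => k ** rho u (xi 0) | S n' => kk u (xi n') ** rho u (xi (S n')) end.
Definition ush u (z : nat -> M) : nat -> M := fun n => kk u (z (S n)) ** rho u (z n).

Definition psi u (w : Om) : Om := (rho u (fst w), shift u (kk u (fst w)) (snd w)).
Definition psiinv u (w : Om) : Om := (kk u (snd w 0) ** fst w, ush u (snd w)).

Lemma rr_rho u (m : M) : rho u (rho u m) = rho u m.
Proof. apply Mrho_idem; auto. Qed.

Lemma psiinv_psi u w : psiinv u (psi u w) = w.
Proof.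
  destruct w as [m xi]. unfold psiinv, psi. simpl. f_equal.
  - rewrite k3; auto using k1, rr_rho. apply k2.
  - apply functional_extensionality. intro n. unfold ush, shift. simpl.
    rewrite k3; auto using k1, rr_rho. destruct n.
    + rewrite rho_ka; auto using k1, rr_rho. apply k2.
    + rewrite rho_ka; auto using k1, rr_rho. apply k2.
Qed.

Lemma psi_psiinv u w : rho u (fst w) = fst w -> psi u (psiinv u w) = w.
Proof.
  destruct w as [n z]. simpl. intro H. unfold psiinv, psi. simpl. f_equal.
  - apply rho_ka; auto using k1.
  - rewrite k3; auto using k1. apply functional_extensionality. intro i. unfold ush, shift. destruct i.
    + rewrite rho_ka; auto using k1, rr_rho. apply k2.
    + rewrite k3; auto using k1, rr_rho. rewrite rho_ka; auto using k1, rr_rho. apply k2.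
Qed.

Definition Th v (w : Om) : Om := (@Mth K le perp v (fst w), snd w).
Definition Th' v (w : Om) : Om := (@Mth' K le perp v (fst w), snd w).

Definition sg v (w : Om) : Om := psiinv v (Th v (psi (root le v) w)).
Definition sginv v (w : Om) : Om := psiinv (root le v) (Th' v (psi v w)).

Lemma Th'_Th v w : Th' v (Th v (psi (root le v) w)) = psi (root le v) w.
Proof. destruct w. unfold psi, Th, Th'. simpl. rewrite Mth'_Mth, rr_rho; auto. Qed.

Lemma Th_Th' v w : Th v (Th' v (psi v w)) = psi v w.
Proof. destruct w. unfold psi, Th, Th'. simpl. rewrite Mth_Mth', rr_rho; auto. Qed.

Lemma sginv_sg v w : sginv v (sg v w) = w.
Proof.
  unfold sginv, sg. rewrite psi_psiinv. rewrite Th'_Th. apply psiinv_psi.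
  unfold Th. simpl. apply Mrho_Mth; auto.
Qed.

Lemma sg_sginv v w : sg v (sginv v w) = w.
Proof.
  unfold sginv, sg. rewrite psi_psiinv. rewrite Th_Th'. apply psiinv_psi.
  unfold Th'. simpl. apply Mrho_Mth'; auto.
Qed.

Definition Rm (g : M) (w : Om) : Om := (fst w ** g, snd w).

Lemma Rm_Rm g h w : Rm h (Rm g w) = Rm (g ** h) w.
Proof. destruct w; unfold Rm; simpl. rewrite Massoc; auto. Qed.

Lemma Rm_one w : Rm one w = w.
Proof. destruct w; unfold Rm; simpl. rewrite Mmul1r; auto. Qed.

Lemma sg_intertwine v (a : M) w : rho (root le v) a = a ->
  sg v (Rm a w) = Rm (@Mth K le perp v a) (sg v w).
Proof.
  intro H. destruct w as [m xi]. unfold sg, Rm, psi, Th, psiinv. simpl.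
  rewrite (k4 (root le v) m H). rewrite Mrho_hom, H; auto. rewrite Mth_hom; auto. rewrite Massoc. auto.
Qed.

End S7.


Section S8.
Variable K : Type.
Variable le : K -> K -> Prop.
Variable perp : K -> K -> Prop.
Variable HK : causal_poset le perp.

Notation word := (word K).
Notation W := (wequiv le).
Notation L := (Lgrp le).
Notation M := (M le perp).
Notation cls := (cls le perp).
Notation "p ** q" := (Mmul p q) (at level 40, left associativity).
Notation one := (@M1 K le perp).
Notation rho := (@Mrho K le perp).
Notation Om := (Om le perp).

Lemma Eb_walk b : T1 le b -> walk (root le (bd1 b)) (root le (bd1 b)) (Eb le b).
Proof. intro H. unfold Eb. eapply walk_app2. apply tau_walk. eapply walk_app2. apply walk_single.
  rewrite <- (root_letter H). apply walk_winv. apply tau_walk. Qed.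

Lemma Eb_L b : T1 le b -> L (Eb le b).
Proof. intro H. eapply walk_L. apply Eb_word; auto. apply Eb_walk; auto. Qed.

Lemma Eb_cancel b : T1 le b -> W (Eb le b ++ Eb le (opp b)) [].
Proof.
  intro H. unfold Eb. simpl. rewrite <- !app_assoc. simpl.
  eapply W_trans. apply W_app_l. apply W_cons. apply W_mid. apply tau_word.
  eapply W_trans. apply W_cancel; auto. apply W_inv_r. apply tau_word.
Qed.

Definition phi (b : simplex K) (o : Om) : Om :=
  sg (bd0 b) (Rm (cls (Eb le b)) (sginv (bd1 b) o)).

Fixpoint Phi (w : word) (o : Om) : Om :=
  match w with [] => o | b :: w' => Phi w' (phi b o) end.

Lemma Phi_app (w1 w2 : word) o : Phi (w1 ++ w2) o = Phi w2 (Phi w1 o).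
Proof. revert o. induction w1; simpl; auto. Qed.

Lemma phi_cancel b o : T1 le b -> phi (opp b) (phi b o) = o.
Proof.
  intro H. unfold phi. simpl. rewrite (sginv_sg HK), Rm_Rm, Mmul_cls; auto using Eb_L, T1_opp.
  rewrite (cls_W perp (x := Eb le b ++ Eb le (opp b)) (y := [])); [ | apply L_app; auto using Eb_L, T1_opp | apply Eb_cancel; auto].
  fold (@M1 K le perp). rewrite Rm_one. apply (sg_sginv HK).
Qed.

Lemma Phi_W (w w' : word) : W w w' -> forall o, Phi w o = Phi w' o.
Proof.
  revert w w'. apply (@W_ind_gen K le (fun w w' => forall o, Phi w o = Phi w' o)).
  - auto.
  - intros; symmetry; auto.
  - intros u v w H1 H2 o. rewrite H1; auto.
  - intros l1 l2 b Hb o. change (b :: opp b :: l2) with ([b; opp b] ++ l2).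
    rewrite !Phi_app. simpl. rewrite phi_cancel; auto.
Qed.

Lemma Phi_walk (w : word) a c : is_word le w -> walk a c w -> forall o,
  Phi w o = sg c (Rm (cls (tau le a ++ w ++ winv (tau le c))) (sginv a o)).
Proof.
  intros Hw H. induction H; intros o.
  - simpl. rewrite (cls_W perp (y := [])). fold (@M1 K le perp). rewrite Rm_one, (sg_sginv HK). auto.
    eapply walk_L. apply is_word_app2. apply tau_word. apply is_word_winv, tau_word.
    eapply walk_app2. apply tau_walk. apply walk_winv. apply tau_walk.
    apply W_inv_r. apply tau_word.
  - inversion Hw; subst. simpl. rewrite IHwalk; auto. unfold phi. rewrite (sginv_sg HK).
    assert (Rc : root le c = root le (bd0 b)).
    { symmetry. apply root_eq. exists w. split; auto. }
    assert (Rb := root_letter H3).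
    assert (Lw1 : L (tau le (bd0 b) ++ w ++ winv (tau le c))).
    { eapply walk_L. repeat apply is_word_app2; auto using tau_word, is_word_winv.
      eapply walk_app2. apply tau_walk. eapply walk_app2. eauto. rewrite <- Rc. apply walk_winv, tau_walk. }
    rewrite Rm_Rm, Mmul_cls; auto using Eb_L. f_equal. f_equal. apply cls_W.
    apply L_app; auto using Eb_L. unfold Eb. rewrite <- !app_assoc. simpl.
    apply W_app_l. apply W_cons. apply W_mid. apply tau_word.
Qed.

Lemma Phi_loop (p : word) v : is_word le p -> walk v v p -> forall o, Phi p o = Rm (cls p) o.
Proof.
  intros Hw H o. rewrite (Phi_walk Hw H).
  assert (Hr : is_word le (tau le v ++ p ++ winv (tau le v)) /\
               walk (root le v) (root le v) (tau le v ++ p ++ winv (tau le v))).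
  { apply conj_walk' with v; auto using tau_word, tau_walk. }
  destruct Hr as [Hr1 Hr2].
  rewrite (sg_intertwine HK). rewrite (sg_sginv HK). f_equal.
  - assert (Lx : L (tau le v ++ p ++ winv (tau le v))) by (eapply walk_L; eauto).
    rewrite (Mth_cls HK v Lx). destruct (th_walk v (x := tau le v ++ p ++ winv (tau le v)) Hr1) as [A B].
    apply cls_W. eapply walk_L; eauto.
    eapply W_trans. apply W_app_l. apply W_app_r. apply rr_walkid; auto.
    rewrite <- !app_assoc. eapply W_trans. apply W_mid. apply tau_word.
    rewrite <- (app_nil_r p) at 2. apply W_app_l. apply W_inv_l. apply tau_word.
  - rewrite Mrho_cls; auto. 2: eapply walk_L; eauto. apply cls_W. apply rr_L; auto.
    apply rr_walkid; auto.
Qed.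

Lemma Phi_L (l : word) : L l -> forall o, Phi l o = Rm (cls l) o.
Proof.
  intro H. induction H; intro o.
  - destruct (isloop_walk H) as [v Hv]. apply (Phi_loop (loop_word H) Hv).
  - simpl. unfold M1. rewrite Rm_one. auto.
  - unfold wmul. rewrite Phi_app, IHgen1, IHgen2, Rm_Rm, Mmul_cls; auto.
  - assert (E : forall x, Phi (winv u) (Phi u x) = x).
    { intro x. rewrite <- Phi_app. rewrite (Phi_W (W_inv_r (L_word H))). auto. }
    rewrite <- (E (Rm (cls (winv u)) o)). f_equal. rewrite IHgen, Rm_Rm, Mmul_cls; auto using L_winv.
    rewrite (cls_W perp (y := [])). fold (@M1 K le perp). symmetry. apply Rm_one.
    apply L_app; auto using L_winv. apply W_inv_l, L_word; auto.
  - rewrite <- (Phi_W H0). rewrite IHgen. f_equal. apply cls_W; auto.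
Qed.

Lemma Phi_CF (c : word) : CF le perp c -> forall o, Phi c o = o.
Proof.
  intro H. induction H; intro o.
  - destruct H as [w0 [p1 [p2 [Hw [L1 [L2 [D E]]]]]]]. subst. rewrite comm_eq.
    replace (winv w0 ++ winv p2 ++ winv p1 ++ p2 ++ p1 ++ w0) with
      (winv w0 ++ (winv p2 ++ winv p1 ++ p2 ++ p1) ++ w0) by (rewrite <- !app_assoc; reflexivity).
    rewrite (Phi_app (winv w0)), (Phi_app (winv p2 ++ winv p1 ++ p2 ++ p1) w0).
    assert (Lc : Lgrp le (winv p2 ++ winv p1 ++ p2 ++ p1)).
    { apply L_loop in L1. apply L_loop in L2. repeat apply L_app; auto using L_winv. }
    rewrite (Phi_L Lc). rewrite (cls_CL (le:=le) (perp:=perp)). rewrite Rm_one.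
    rewrite <- Phi_app. rewrite (Phi_W (W_inv_l Hw)). auto.
    apply gen_base. exists [], p1, p2. split. apply L_nil. split; auto. split; auto. split; auto.
    rewrite comm_eq. simpl. rewrite app_nil_r. auto.
  - auto.
  - unfold wmul. rewrite Phi_app, IHgen1, IHgen2. auto.
  - rewrite <- (IHgen o) at 1. rewrite <- Phi_app. rewrite (Phi_W (W_inv_r (CF_word H))). auto.
  - rewrite <- (Phi_W H0). auto.
Qed.

Lemma main_back w : CF le perp w -> Lgrp le w -> CL le perp w.
Proof.
  intros H1 H2. pose (o := (one, fun _ : nat => one) : Om).
  assert (E : Phi w o = o) by (apply Phi_CF; auto).
  rewrite (Phi_L H2) in E. unfold Rm, o in E. simpl in E. injection E. intro E'.
  rewrite Mmul1l in E'. apply cls_M1; auto.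
Qed.

End S8.

Unset Implicit Arguments.

Theorem lemma3p3 (K : Type) (le perp : K -> K -> Prop)
  (HK : causal_poset le perp) :
  forall w : word K, is_word le w ->
    (CL le perp w <-> CF le perp w /\ Lgrp le w).
Proof.
  intros w _. split.
  - intro H. split. apply CL_CF; auto. apply (CL_L H).
  - intros [H1 H2]. apply (main_back HK); auto.
Qed.
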